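(* Let $G$ be a simple graph and let $k \geq 1$ be an integer. Then $G$ has a non-empty $k$-core if and only if $\rho_k(G) \geq 1$.
   Context: All graphs are finite, simple and undirected. The $k$-core of a graph $G$ is the maximal subgraph of $G$ in which every vertex has degree at least $k$ within the subgraph (it may be empty; ''$G$ has a $k$-core'' means it is non-empty, i.e. $G$ has a subgraph of minimum degree at least $k$). For a tensor $\mathcal{A}=(a_{i_1 i_2\cdots i_m})$ of order $m$ and dimension $n$ and $\mathbf{x}\in\mathbb{C}^n$, $\mathcal{A}\mathbf{x}^{m-1}\in\mathbb{C}^n$ has $i$-th component $\sum_{i_2,\ldots,i_m=1}^n a_{i i_2\cdots i_m}x_{i_2}\cdots x_{i_m}$. A complex number $\lambda$ is an eigenvalue of $\mathcal{A}$ if there is a nonzero $\mathbf{x}\in\mathbb{C}^n$ with $\mathcal{A}\mathbf{x}^{m-1}=\lambda\mathbf{x}^{[m-1]}$, where $\mathbf{x}^{[m-1]}=(x_1^{m-1},\ldots,x_n^{m-1})^{\mathrm T}$; $\mathbf{x}$ is then an eigenvector. The spectral radius $\rho(\mathcal{A})$ is the largest modulus of the eigenvalues of $\mathcal{A}$. For a graph $G$ on vertex set $\{1,\ldots,n\}$ with neighborhoods $N_G(i)$, the $k$-adjacency tensor $\mathcal{A}^{(k)}(G)=(a_{i_1 i_2\cdots i_{k+1}})$ is the order-$(k+1)$, dimension-$n$ tensor with $a_{i_1 i_2\cdots i_{k+1}}=1/k!$ if $i_1,\ldots,i_{k+1}$ are pairwise distinct and $\{i_2,\ldots,i_{k+1}\}\subseteq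 N_G(i_1)$, and $0$ otherwise. Equivalently, $(\mathcal{A}^{(k)}(G)\mathbf{x}^k)_i=\sum_{T\subseteq N_G(i),\,|T|=k}\prod_{j\in T}x_j$. Define $\rho_k(G)=\rho(\mathcal{A}^{(k)}(G))$. (For $k=1$ this is the adjacency matrix and its spectral radius.) *)

(* Defs.v *)
From HB Require Import structures.
From mathcomp Require Import all_boot all_order all_algebra.
From mathcomp Require Import complex.
From mathcomp Require Import boolp classical_sets reals.
Set Implicit Arguments. Unset Strict Implicit. Unset Printing Implicit Defensive.
Import Order.TTheory GRing.Theory Num.Theory.
Local Open Scope ring_scope.
Local Open Scope classical_set_scope.

Definition simple_graph (V : finType) (adj : rel V) : Prop :=
  symmetric adj /\ irreflexive adj.

Definition nbhd (V : finType) (adj : rel V) (i : V) : {set V} := [set j | adj i j].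

Definition has_kcore (V : finType) (adj : rel V) (k : nat) : Prop :=
  exists S : {set V}, (S != finset.set0) /\
    forall i, i \in S -> (k <= #|nbhd adj i :&: S|)%N.

(* Entry a_{i, f 0, ..., f (k-1)} of the k-adjacency tensor A^(k)(G),
   an order-(k+1) tensor indexed by V; f : 'I_k -> V lists i_2..i_{k+1}. *)
Definition kadj_entry (R : rcfType) (V : finType) (adj : rel V) (k : nat)
    (i : V) (f : {ffun 'I_k -> V}) : R[i] :=
  if [&& injectiveb f, i \notin codom f & [forall j, adj i (f j)]]
  then (k`!%:R)^-1 else 0.

Definition kadj_apply (R : rcfType) (V : finType) (adj : rel V) (k : nat)
    (x : V -> R[i]) (i : V) : R[i] :=
  \sum_(f : {ffun 'I_k -> V}) @kadj_entry R V adj k i f * \prod_(j < k) x (f j).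

Definition kadj_eigenvalue (R : rcfType) (V : finType) (adj : rel V) (k : nat)
    (l : R[i]) : Prop :=
  exists x : V -> R[i], (exists i, x i != 0) /\
    forall i, kadj_apply adj k x i = l * x i ^+ k.

Definition rho_k (R : realType) (V : finType) (adj : rel V) (k : nat) : R :=
  sup [set Num.sqrt (complex.Re l ^+ 2 + complex.Im l ^+ 2) | l in @kadj_eigenvalue R V adj k].

(* Main.v *)
Require Import Defs.
From HB Require Import structures.
From mathcomp Require Import all_boot all_order all_algebra.
From mathcomp Require Import complex.
From mathcomp Require Import boolp classical_sets reals.
From mathcomp Require Import ring lra.
From mathcomp Require Import fingroup perm.
From Stdlib Require Import Classical.
Set Implicit Arguments. Unset Strict Implicit. Unset Printing Implicit Defensive.
Import Order.TTheory GRing.Theory Num.Theory.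
Local Open Scope ring_scope.

Section ProdLip.
Variable R : realFieldType.

Lemma prod_lip (n : nat) (a b : 'I_n -> R) (M e : R) :
  1 <= M -> 0 <= e ->
  (forall j, 0 <= a j /\ a j <= b j /\ b j <= M /\ b j - a j <= e) ->
  \prod_(j < n) b j - \prod_(j < n) a j <= n%:R * M ^+ n * e.
Proof.
move=> M1 e0; elim: n a b => [|n IH] a b H.
  by rewrite !big_ord0 subrr mul0r mul0r.
rewrite !big_ord_recr /=.
set B := \prod_(i < n) b (widen_ord (leqnSn n) i).
set A := \prod_(i < n) a (widen_ord (leqnSn n) i).
have IH' : B - A <= n%:R * M ^+ n * e :=
  IH (fun i => a (widen_ord (leqnSn n) i)) (fun i => b (widen_ord (leqnSn n) i)) (fun j => H _).
have A0 : 0 <= A by apply: prodr_ge0 => i _; case: (H (widen_ord (leqnSn n) i)).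
have AB : A <= B by apply: ler_prod => i _; case: (H (widen_ord (leqnSn n) i)) => ? [? _]; apply/andP.
have BM : B <= M ^+ n.
  rewrite -(card_ord n) -prodr_const; apply: ler_prod => i _.
  by case: (H (widen_ord (leqnSn n) i)) => ? [? [? _]]; apply/andP; split; lra.
have [an0 [anbn [bnM bne]]] := H ord_max.
have Mn1 : 1 <= M ^+ n by apply: exprn_ege1.
have eq1 : M ^+ n.+1 = M ^+ n * M by rewrite exprSr.
rewrite eq1 -[n.+1]addn1 natrD.
have key : B * b ord_max - A * a ord_max = B * (b ord_max - a ord_max) + (B - A) * a ord_max by ring.
rewrite key.
have h1 : B * (b ord_max - a ord_max) <= M ^+ n * e.
  apply: ler_pM; lra.
have h2 : (B - A) * a ord_max <= (n%:R * M ^+ n * e) * M.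
  apply: ler_pM; lra.
have n0 : 0 <= (n%:R : R) by apply: ler0n.
have hh : 0 <= M ^+ n * e by apply: mulr_ge0; lra.
have h3 : M ^+ n * e <= M ^+ n * e * M by rewrite -{1}[M ^+ n * e]mulr1; apply: ler_pM; lra.
have -> : (n%:R + 1) * (M ^+ n * M) * e = (n%:R * M ^+ n * e) * M + M ^+ n * e * M by ring.
lra.
Qed.

Lemma pow_le_self (t : R) (k : nat) : 0 <= t -> t <= 1 -> (0 < k)%N -> t ^+ k <= t.
Proof.
move=> t0 t1; case: k => // k _; rewrite exprS.
have : t ^+ k <= 1 by apply: exprn_ile1.
have : 0 <= t ^+ k by apply: exprn_ge0.
nra.
Qed.
End ProdLip.

Section Main.
Variable R : realType.
Variable V : finType.
Variable adj : rel V.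
Variable k : nat.
Hypothesis adj_sym : symmetric adj.
Hypothesis adj_irr : irreflexive adj.
Hypothesis k_gt0 : (0 < k)%N.

Definition good (i : V) (f : {ffun 'I_k -> V}) : bool :=
  [&& injectiveb f, i \notin codom f & [forall j, adj i (f j)]].

Definition Ar (x : V -> R) (i : V) : R :=
  \sum_(f | good i f) \prod_(j < k) x (f j).

Definition NN : R := #|{ffun 'I_k -> V}|%:R.

Lemma Ar_ge0 x i : (forall j, 0 <= x j) -> 0 <= Ar x i.
Proof. by move=> H; apply: sumr_ge0 => f _; apply: prodr_ge0. Qed.

Lemma Ar_le x y i : (forall j, 0 <= x j <= y j) -> Ar x i <= Ar y i.
Proof. by move=> H; apply: ler_sum => f _; apply: ler_prod => j _. Qed.

Lemma ArZ c x i : Ar (fun j => c * x j) i = c ^+ k * Ar x i.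
Proof.
rewrite /Ar mulr_sumr; apply: eq_bigr => f _.
by rewrite big_split /= prodr_const card_ord.
Qed.

Lemma good_neq i f j : good i f -> f j != i.
Proof.
case/and3P => _ ni _; apply/eqP => e; move: ni; rewrite -e.
by rewrite codom_f.
Qed.

Lemma good_adj i f j : good i f -> adj i (f j).
Proof. by case/and3P => _ _ /forallP. Qed.

Lemma Ar_indep x y i : (forall j, j != i -> x j = y j) -> Ar x i = Ar y i.
Proof.
move=> H; apply: eq_bigr => f gf; apply: eq_bigr => j _.
by apply: H; apply: good_neq.
Qed.

Lemma sum_good_le (F : {ffun 'I_k -> V} -> R) i c :
  0 <= c -> (forall f, good i f -> F f <= c) -> \sum_(f | good i f) F f <= NN * c.
Proof.
move=> c0 H; rewrite big_mkcond /=.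
apply: le_trans (_ : \sum_(f : {ffun 'I_k -> V}) c <= _).
  by apply: ler_sum => f _; case: ifP => g; [apply: H|].
by rewrite sumr_const /NN mulr_natl.
Qed.

Lemma Ar_bound x i m : 0 <= m -> (forall j, 0 <= x j <= m) -> Ar x i <= NN * m ^+ k.
Proof.
move=> m0 H; apply: sum_good_le; first exact: exprn_ge0.
move=> f _; rewrite -[X in m ^+ X](card_ord k) -prodr_const; apply: ler_prod => j _; exact: H.
Qed.

Lemma Ar_lip x y i e : 0 <= e ->
  (forall j, 0 <= x j /\ x j <= y j /\ y j <= 1 /\ y j - x j <= e) ->
  Ar y i - Ar x i <= NN * (k%:R * e).
Proof.
move=> e0 H; rewrite /Ar -sumrB; apply: sum_good_le.
  by apply: mulr_ge0 => //; apply: ler0n.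
move=> f _; have := @prod_lip R k (fun j => x (f j)) (fun j => y (f j)) 1 e (lexx 1) e0 (fun j => H (f j)).
by rewrite expr1n mulr1.
Qed.

Lemma pow_lip (a b e : R) : 0 <= a -> a <= b -> b <= 1 -> b - a <= e ->
  b ^+ k - a ^+ k <= k%:R * e.
Proof.
move=> a0 ab b1 bae.
have e0 : 0 <= e by lra.
have := @prod_lip R k (fun _ : 'I_k => a) (fun _ => b) 1 e (lexx 1) e0 (fun j => conj a0 (conj ab (conj b1 bae))).
by rewrite !prodr_const card_ord expr1n mulr1.
Qed.


Lemma fin_delta (T : finType) (Q : T -> R -> Prop) :
  (forall i, exists d, 0 < d /\ forall e, 0 < e -> e <= d -> Q i e) ->
  exists d, 0 < d /\ forall i, Q i d.
Proof.
move=> H.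
suff [d [d0 Hd]] : exists d, 0 < d /\ forall e, 0 < e -> e <= d ->
   forall i, i \in enum T -> Q i e.
  by exists d; split => // i; apply: Hd => //; rewrite mem_enum.
elim: (enum T) => [|a s [d1 [d10 H1]]].
  by exists 1; split => // e _ _ i; rewrite in_nil.
have [d2 [d20 H2]] := H a.
exists (Num.min d1 d2); split; first by rewrite lt_min d10 d20.
move=> e e0; rewrite le_min => /andP [ed1 ed2] i; rewrite in_cons => /orP [/eqP -> | his].
  exact: H2.
exact: H1.
Qed.

Lemma exists_good_pos x i : (forall j, 0 <= x j) -> 0 < Ar x i ->
  exists f, good i f /\ forall m, 0 < x (f m).
Proof.
move=> x0 Hpos; apply: NNPP => Hn.
suff : Ar x i = 0 by move=> e; move: Hpos; rewrite e ltxx.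
apply: big1 => f gf; apply/eqP/prodf_eq0.
have := not_ex_all_not _ _ Hn f => /not_and_or [//|] /not_all_ex_not [m hm].
exists m => //; apply/eqP; apply: le_anti; apply/andP; split; last exact: x0.
by rewrite leNgt; apply/negP => h; exact: hm h.
Qed.

Definition o0 : 'I_k := Ordinal k_gt0.

Lemma good_through x i j : (forall m, 0 <= x m) -> 0 < Ar x i -> adj i j -> 0 < x j ->
  exists f m0, [/\ good i f, f m0 = j & forall m, 0 < x (f m)].
Proof.
move=> x0 Hp aij xj; have [f [gf fp]] := exists_good_pos x0 Hp.
case: (boolP (j \in codom f)) => [/codomP [m0 ->]|nj].
  by exists f, m0.
pose f' := [ffun m => if m == o0 then j else f m].
exists f', o0; split.
- case/and3P: gf => inj ni adjf; apply/and3P; split.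
  + apply/injectiveP => m1 m2; rewrite !ffunE.
    have injf := injectiveP _ inj.
    case: (m1 =P o0) => [->|n1]; case: (m2 =P o0) => [->|n2] //.
    * by move=> e; move: nj; rewrite e codom_f.
    * by move=> e; move: nj; rewrite -e codom_f.
    * exact: injf.
  + apply/codomP => [[m]]; rewrite ffunE; case: (m =P o0) => _ e.
      by move: aij; rewrite -e adj_irr.
    by move: ni; rewrite e codom_f.
  + apply/forallP => m; rewrite ffunE; case: (m =P o0) => _ //.
    exact: (forallP adjf).
- by rewrite ffunE eqxx.
- by move=> m; rewrite ffunE; case: (m =P o0).
Qed.


Definition sub (mu : R) (x : V -> R) := forall i, 0 <= x i /\ mu * x i ^+ k <= Ar x i.
Definition Dset (mu : R) (x : V -> R) : {set V} :=
  finset (fun i => (x i != 0) && (mu * x i ^+ k < Ar x i)).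

Lemma inD mu x i : (i \in Dset mu x) = (x i != 0) && (mu * x i ^+ k < Ar x i).
Proof. by rewrite finset.in_set. Qed.

Lemma zpow : (0 : R) ^+ k = 0.
Proof. by rewrite expr0n eqn0Ngt k_gt0. Qed.

Lemma card_grow (A B : {set V}) i : A \subset B -> i \in B -> i \notin A -> (#|A| < #|B|)%N.
Proof. by move=> AB iB iA; apply: proper_card; apply/properP; split => //; exists i. Qed.

Lemma caseA mu x i : 0 < mu -> sub mu x -> x i = 0 -> 0 < Ar x i ->
  exists y, sub mu y /\ (exists j, y j != 0) /\ (#|Dset mu x| < #|Dset mu y|)%N.
Proof.
move=> mu0 sx xi0 Ap.
pose t := Num.min 1 (Ar x i / (2 * mu)).
have mu2 : 0 < 2 * mu by apply: mulr_gt0.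
have t0 : 0 < t by rewrite lt_min ltr01 divr_gt0.
have t1 : t <= 1 by rewrite ge_min lexx.
have t2 : t <= Ar x i / (2 * mu) by rewrite ge_min lexx orbT.
have tk : mu * t ^+ k < Ar x i.
  have h1 := pow_le_self (ltW t0) t1 k_gt0.
  have h2 : t * (2 * mu) <= Ar x i by rewrite -ler_pdivlMr.
  nra.
pose y := fun j => if j == i then t else x j.
have Ayi : Ar y i = Ar x i by apply: Ar_indep => j nj; rewrite /y (negbTE nj).
have xy : forall j, 0 <= x j <= y j.
  move=> j; rewrite /y; case: (j =P i) => [->|_]; first by rewrite xi0 lexx ltW.
  by rewrite lexx andbT; case: (sx j).
have Axy : forall j, Ar x j <= Ar y j by move=> j; apply: Ar_le.
have sy : sub mu y.
  move=> j; case: (j =P i) => [->|nj].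
    by rewrite /y eqxx Ayi; split; [apply: ltW|apply: ltW].
  have -> : y j = x j by rewrite /y; move/eqP/negbTE: nj => ->.
  by case: (sx j) => a b; split => //; apply: le_trans b (Axy j).
exists y; split => //; split; first by exists i; rewrite /y eqxx; apply: lt0r_neq0.
apply: (@card_grow _ _ i).
- apply/fintype.subsetP => j; rewrite !inD => /andP [xj lt].
  have nj : j != i by apply: contraNneq xj => ->; rewrite xi0.
  have -> : y j = x j by rewrite /y (negbTE nj).
  by rewrite xj /=; apply: lt_le_trans lt (Axy j).
- by rewrite inD Ayi {1 2}/y eqxx lt0r_neq0.
- by rewrite inD xi0 eqxx.
Qed.

Lemma caseB mu x i j : 0 < mu -> sub mu x -> j \in Dset mu x -> x i != 0 ->
  i \notin Dset mu x -> adj i j ->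
  exists y, sub mu y /\ (exists m, y m != 0) /\ (#|Dset mu x| < #|Dset mu y|)%N.
Proof.
move=> mu0 sx jD xin0 iD aij.
have x0 : forall m, 0 <= x m by move=> m; case: (sx m).
have xj0 : 0 < x j by move: jD; rewrite inD => /andP [h _]; rewrite lt0r h x0.
have xi0 : 0 < x i by rewrite lt0r xin0 x0.
have gap : mu * x j ^+ k < Ar x j by move: jD; rewrite inD => /andP [_ h].
have nij : i != j by apply: contraNneq iD => ->.
pose M := x j + 1.
have M1 : 1 <= M by rewrite /M; lra.
have Mk : 1 <= M ^+ k by apply: exprn_ege1.
have kR : 1 <= (k%:R : R) by rewrite ler1n.
pose C := mu * (k%:R * M ^+ k).
have C0 : 0 < C by apply: mulr_gt0 => //; apply: mulr_gt0; lra.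
pose g := Ar x j - mu * x j ^+ k.
have g0 : 0 < g by rewrite /g subr_gt0.
pose t := Num.min 1 (g / (2 * C)).
have C2 : 0 < 2 * C by apply: mulr_gt0.
have t0 : 0 < t by rewrite lt_min ltr01 divr_gt0.
have t1 : t <= 1 by rewrite ge_min lexx.
have t2 : t * (2 * C) <= g by rewrite -ler_pdivlMr // ge_min lexx orbT.
have plip : (x j + t) ^+ k - x j ^+ k <= k%:R * M ^+ k * t.
  have := @prod_lip R k (fun _ => x j) (fun _ => x j + t) M t M1 (ltW t0).
  rewrite !prodr_const card_ord; apply.
  by move=> _; rewrite /M; split; [|split; [|split]]; lra.
have tk : mu * (x j + t) ^+ k < Ar x j.
  have : mu * ((x j + t) ^+ k - x j ^+ k) <= mu * (k%:R * M ^+ k * t).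
    by apply: ler_wpM2l; lra.
  rewrite /g /C in t2; nra.
pose y := fun m => if m == j then x j + t else x m.
have Ayj : Ar y j = Ar x j by apply: Ar_indep => m nm; rewrite /y (negbTE nm).
have xy : forall m, 0 <= x m <= y m.
  move=> m; rewrite /y; case: (m =P j) => [->|_]; first by rewrite x0 /=; lra.
  by rewrite lexx andbT.
have y0 : forall m, 0 <= y m by move=> m; case/andP: (xy m) => a b; apply: le_trans b.
have Axy : forall m, Ar x m <= Ar y m by move=> m; apply: Ar_le.
have yi : y i = x i by rewrite /y (negbTE nij).
have Api : 0 < Ar x i.
  case: (sx i) => _ h; apply: lt_le_trans h; apply: mulr_gt0 => //; exact: exprn_gt0.
have [f [m0 [gf fm0 fpos]]] := good_through x0 Api aij xj0.
have strict : Ar x i < Ar y i.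
  rewrite -subr_gt0 /Ar -sumrB (bigD1 f) //=.
  have rest : 0 <= \sum_(g0 | good i g0 && (g0 != f))
      (\prod_(j0 < k) y (g0 j0) - \prod_(j0 < k) x (g0 j0)).
    apply: sumr_ge0 => g1 _; rewrite subr_ge0; apply: ler_prod => m _; exact: xy.
  suff : 0 < \prod_(j0 < k) y (f j0) - \prod_(j0 < k) x (f j0) by lra.
  rewrite (bigD1 m0) //= (bigD1 m0 (F := fun j0 => x (f j0))) //= fm0.
  set Py := \prod_(m | m != m0) y (f m).
  set Px := \prod_(m | m != m0) x (f m).
  have Px0 : 0 < Px by apply: prodr_gt0 => m _; exact: fpos.
  have PxPy : Px <= Py by apply: ler_prod => m _; exact: xy.
  have yjE : y j = x j + t by rewrite /y eqxx.
  rewrite yjE; nra.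
have sy : sub mu y.
  move=> m; split; first exact: y0.
  case: (m =P j) => [->|nm].
    by rewrite Ayj {1}/y eqxx; apply: ltW.
  have -> : y m = x m by rewrite /y; move/eqP/negbTE: nm => ->.
  by case: (sx m) => _ b; apply: le_trans b (Axy m).
exists y; split => //; split; first by exists i; rewrite yi.
apply: (@card_grow _ _ i).
- apply/fintype.subsetP => m; rewrite !inD => /andP [xm lt].
  case: (m =P j) => [->|nm].
    rewrite Ayj {1 2}/y eqxx; apply/andP; split => //.
    by apply: lt0r_neq0; lra.
  have -> : y m = x m by rewrite /y; move/eqP/negbTE: nm => ->.
  by rewrite xm /=; apply: lt_le_trans lt (Axy m).
- rewrite inD yi xin0 /=; case: (sx i) => _ h; exact: le_lt_trans h strict.
- exact: iD.
Qed.


Lemma eigen_exists mu : 0 < mu -> (exists x, sub mu x /\ exists i, x i != 0) ->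
  (forall mu' x, mu < mu' -> sub mu' x -> forall i, x i = 0) ->
  exists x, (forall i, 0 <= x i) /\ (exists i, x i != 0) /\
    forall i, Ar x i = mu * x i ^+ k.
Proof.
move=> mu0 [x0 [s0 nz0]] H2; apply: NNPP => Hne.
have step : forall x, sub mu x -> (exists i, x i != 0) ->
   exists y, sub mu y /\ (exists i, y i != 0) /\ (#|Dset mu x| < #|Dset mu y|)%N.
  move=> x sx nzx.
  case: (classic (exists i, x i = 0 /\ 0 < Ar x i)) => [[i [xi Ai]]|nA].
    exact: (caseA mu0 sx xi Ai).
  case: (classic (exists i j, [/\ j \in Dset mu x, x i != 0, i \notin Dset mu x & adj i j]))
    => [[i [j [jD xi iD aij]]]|nB].
    exact: (caseB mu0 sx jD xi iD aij).
  exfalso.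
  have x0' : forall m, 0 <= x m by move=> m; case: (sx m).
  case: (set_0Vmem (Dset mu x)) => [D0|[i0 i0D]].
    apply: Hne; exists x; split => //; split => //.
    move=> i; case: (sx i) => xi0 le1.
    case: (x i =P 0) => [xi|xin].
      have h : ~ 0 < Ar x i by move=> h; apply: nA; exists i.
      rewrite xi zpow mulr0; apply: le_anti; rewrite Ar_ge0 // andbT leNgt.
      by apply/negP.
    have : i \notin Dset mu x by rewrite D0 finset.in_set0.
    rewrite inD; move/eqP/negbTE: xin => -> /=; rewrite -leNgt => h.
    by apply: le_anti; rewrite h le1.
  pose y := fun m => if m \in Dset mu x then x m else 0.
  have yD : forall m, m \in Dset mu x -> y m = x m by move=> m h; rewrite /y h.
  have ynD : forall m, m \notin Dset mu x -> y m = 0 by move=> m h; rewrite /y (negbTE h).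
  have y0 : forall m, 0 <= y m by move=> m; rewrite /y; case: ifP.
  have AyE : forall m, m \in Dset mu x -> Ar y m = Ar x m.
    move=> m mD; apply: eq_bigr => f gf; apply: eq_bigr => j _.
    case: (boolP (f j \in Dset mu x)) => [fjD|fjD]; first exact: yD.
    rewrite ynD //; case: (x (f j) =P 0) => [-> //|xn].
    exfalso; apply: nB; exists (f j), m; split => //; first exact/eqP.
    by rewrite adj_sym; apply: good_adj.
  have [d [d0 Hd]] : exists d, 0 < d /\ forall m,
      m \in Dset mu x -> (mu + d) * x m ^+ k <= Ar x m.
    apply: fin_delta => m.
    case: (boolP (m \in Dset mu x)) => [mD|mD]; last first.
      by exists 1; split => // e _ _ h; move: mD; rewrite h.
    move: (mD); rewrite inD => /andP [xm lt].
    have xk : 0 < x m ^+ k by apply: exprn_gt0; rewrite lt0r xm x0'.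
    exists ((Ar x m - mu * x m ^+ k) / x m ^+ k); split.
      by apply: divr_gt0 => //; rewrite subr_gt0.
    move=> e e0 ed _.
    have : e * x m ^+ k <= Ar x m - mu * x m ^+ k.
      by rewrite -ler_pdivlMr.
    lra.
  have sy : sub (mu + d) y.
    move=> m; split; first exact: y0.
    case: (boolP (m \in Dset mu x)) => [mD|mD].
      by rewrite AyE // yD //; apply: Hd.
    by rewrite ynD // zpow mulr0; apply: Ar_ge0.
  have := H2 (mu + d) y _ sy i0; rewrite yD //.
  move: i0D; rewrite inD => /andP [/eqP xi0 _] h; apply: xi0; apply: h; lra.
have big : forall n, exists x, sub mu x /\ (exists i, x i != 0) /\ (n <= #|Dset mu x|)%N.
  elim => [|n [x [sx [nzx hn]]]]; first by exists x0.
  have [y [sy [nzy hy]]] := step x sx nzx.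
  by exists y; split => //; split => //; apply: leq_ltn_trans hn hy.
have [x [_ [_ hn]]] := big #|V|.+1.
by move: (max_card (mem (Dset mu x))); rewrite leqNgt hn.
Qed.


Lemma pow_mono (a b : R) : 0 <= a -> a <= b -> a ^+ k <= b ^+ k.
Proof.
move=> a0 ab; apply: lerXn2r => //; rewrite nnegrE //; exact: le_trans ab.
Qed.

Lemma sub_bound mu x : sub mu x -> (exists i, x i != 0) -> mu <= NN.
Proof.
move=> sx [i1 nz].
have x0 : forall m, 0 <= x m by move=> m; case: (sx m).
case: (@arg_maxP _ R V i1 xpredT x isT) => j _ Hj.
have m0 : 0 < x j by apply: lt_le_trans (Hj i1 isT); rewrite lt0r nz x0.
have mk : 0 < x j ^+ k by apply: exprn_gt0.
have := Ar_bound j (ltW m0) (fun m => introT andP (conj (x0 m) (Hj m isT))).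
case: (sx j) => _ h1 h2.
by rewrite -(ler_pM2r mk); apply: le_trans h1 h2.
Qed.

Definition P01 mu x := sub mu x /\ forall i, x i <= 1.
Definition Zset mu i : set R := [set r | exists x, P01 mu x /\ x i = r]%classic.
Definition zz mu i := sup (Zset mu i).

Lemma sub_zero mu : sub mu (fun _ => 0).
Proof. by move=> i; split => //; rewrite zpow mulr0; apply: Ar_ge0. Qed.

Lemma Zset_ub mu i : ubound (Zset mu i) 1.
Proof. by move=> r [x [[_ h] <-]]. Qed.

Lemma Zset_has mu i : has_sup (Zset mu i).
Proof.
split; first by exists 0; exists (fun _ => 0); split => //; split => //; apply: sub_zero.
by exists 1; apply: Zset_ub.
Qed.

Lemma Z2 mu x i : P01 mu x -> x i <= zz mu i.
Proof.
move=> Px; apply: ub_le_sup; first by exists 1; apply: Zset_ub.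
by exists x.
Qed.

Lemma Z1 mu i : 0 <= zz mu i /\ zz mu i <= 1.
Proof.
split; first by have := Z2 i (conj (sub_zero mu) (fun _ => ler01)).
by apply: ge_sup; [case: (Zset_has mu i)|apply: Zset_ub].
Qed.

Lemma Z3 mu : 0 <= mu -> P01 mu (zz mu).
Proof.
move=> mu0; split; last by move=> i; case: (Z1 mu i).
move=> i; split; first by case: (Z1 mu i).
have z0 : forall m, 0 <= zz mu m by move=> m; case: (Z1 mu m).
case: (lerP (mu * zz mu i ^+ k) (Ar (zz mu) i)) => // lt; exfalso.
pose g := mu * zz mu i ^+ k - Ar (zz mu) i.
have g0 : 0 < g by rewrite /g subr_gt0.
have kR : 0 <= (k%:R : R) by apply: ler0n.
have C0 : 0 < mu * k%:R + 1 by apply: ltr_wpDl => //; apply: mulr_ge0.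
pose eps := g / (mu * k%:R + 1).
have e0 : 0 < eps by apply: divr_gt0.
have eC : eps * (mu * k%:R + 1) = g by rewrite /eps divfK // lt0r_neq0.
have [r [x [Px <-]] hr] := sup_adherent e0 (Zset_has mu i).
have xz : forall m, 0 <= x m <= zz mu m.
  by move=> m; case: (Px) => s _; case: (s m) => a _; rewrite a /=; exact: Z2 m Px.
have h1 : mu * x i ^+ k <= Ar (zz mu) i.
  by case: Px => s _; case: (s i) => _ h; apply: le_trans h (Ar_le _ xz).
have h2 : zz mu i ^+ k - x i ^+ k <= k%:R * eps.
  apply: pow_lip; first by case/andP: (xz i).
  - by case/andP: (xz i).
  - by case: (Z1 mu i).
  - by rewrite /zz; lra.
have h3 : mu * (zz mu i ^+ k - x i ^+ k) <= mu * (k%:R * eps) by apply: ler_wpM2l.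
rewrite /g in eC; nra.
Qed.

Lemma Z4 mu mu' i : 0 <= mu -> mu <= mu' -> zz mu' i <= zz mu i.
Proof.
move=> mu0 mm; apply: ge_sup; first by case: (Zset_has mu' i).
move=> r [x [[sx x1] <-]]; apply: Z2; split => // m; case: (sx m) => a b; split => //.
apply: le_trans b; apply: ler_wpM2r => //; exact: exprn_ge0.
Qed.

Lemma Z5 mu x : sub mu x -> (exists i, x i != 0) -> exists i, zz mu i = 1.
Proof.
move=> sx [i1 nz].
have x0 : forall m, 0 <= x m by move=> m; case: (sx m).
case: (@arg_maxP _ R V i1 xpredT x isT) => j _ Hj.
have m0 : 0 < x j by apply: lt_le_trans (Hj i1 isT); rewrite lt0r nz x0.
pose y := fun m => (x j)^-1 * x m.
have Py : P01 mu y.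
  split.
    move=> m; split; first by apply: mulr_ge0 => //; rewrite invr_ge0 ltW.
    rewrite /y ArZ exprMn mulrCA; apply: ler_wpM2l; first by apply: exprn_ge0; rewrite invr_ge0 ltW.
    by case: (sx m).
  by move=> m; rewrite /y mulrC ler_pdivrMr // mul1r; apply: Hj.
exists j; apply: le_anti; rewrite (proj2 (Z1 mu j)) /=.
have := Z2 j Py; rewrite /y mulVf //; exact: lt0r_neq0.
Qed.


Lemma attain (c0 : R) : 0 < c0 -> (exists x, sub c0 x /\ exists i, x i != 0) ->
  exists mu, c0 <= mu /\ (exists x, sub mu x /\ exists i, x i != 0) /\
    (forall mu' x, mu < mu' -> sub mu' x -> forall i, x i = 0).
Proof.
move=> c00 Hc.
pose L := [set mu | c0 <= mu /\ exists x, sub mu x /\ exists i, x i != 0]%classic.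
have Lub : ubound L NN by move=> mu [_ [x [sx nz]]]; exact: sub_bound sx nz.
have Lc0 : L c0 by split.
have hasL : has_sup L by split; [exists c0|exists NN].
pose ms := sup L.
have c0ms : c0 <= ms by apply: ub_le_sup => //; exists NN.
have ms0 : 0 < ms by apply: lt_le_trans c0ms.
exists ms; split => //; split; last first.
  move=> mu' x lt sx i; apply: NNPP => nz.
  have : L mu' by split; [lra|exists x; split => //; exists i; apply/eqP].
  move/(ub_le_sup (ex_intro _ NN Lub)) => h; rewrite /ms in lt; lra.
case: (eqVneq ms c0) => [->//|msn].
have lt0 : c0 < ms by rewrite lt_neqAle eq_sym msn c0ms.
have [i0 Hi0] : exists i0, forall mu, c0 <= mu -> mu < ms -> zz mu i0 = 1.
  apply: NNPP => Hn.
  have Hall : forall i, exists mu, [/\ c0 <= mu, mu < ms & zz mu i < 1].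
    move=> i; have := not_ex_all_not _ _ Hn i => /not_all_ex_not [mu].
    move=> H; case: (imply_to_and _ _ H) => c0mu H'; case: (imply_to_and _ _ H') => mums ne.
    exists mu; split => //; rewrite lt_neqAle; apply/andP; split; first exact/eqP.
    by case: (Z1 mu i).
  have [d [d0 Hd]] : exists d, 0 < d /\ forall i,
      exists mu, [/\ c0 <= mu, mu + d <= ms & zz mu i < 1].
    apply: fin_delta => i; have [mu [h1 h2 h3]] := Hall i.
    exists (ms - mu); split; first by rewrite subr_gt0.
    by move=> e e0 ed; exists mu; split => //; lra.
  have [mu Lmu hmu] := sup_adherent d0 hasL.
  case: Lmu => c0mu [x [sx nz]].
  have [i zi] := Z5 sx nz.
  have [mu_i [h1 h2 h3]] := Hd i.
  have : zz mu i <= zz mu_i i by apply: Z4; rewrite /ms in h2; lra.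
  by rewrite zi; lra.
pose W i := [set r | exists mu, [/\ c0 <= mu, mu < ms & zz mu i = r]]%classic.
have Wne : forall i, (W i !=set0)%classic by move=> i; exists (zz c0 i); exists c0; split.
have Wlb0 : forall i, lbound (W i) 0.
  by move=> i r [mu [h1 h2 <-]]; case: (Z1 mu i).
have Whas : forall i, has_lbound (W i) by move=> i; exists 0.
pose w i := inf (W i).
have w0 : forall i, 0 <= w i by move=> i; apply: lb_le_inf.
have wz : forall i mu, c0 <= mu -> mu < ms -> w i <= zz mu i.
  by move=> i mu h1 h2; apply: ge_inf => //; exists mu.
have w1 : forall i, w i <= 1.
  by move=> i; apply: le_trans (wz i c0 (lexx _) lt0) _; case: (Z1 c0 i).
have wi0 : w i0 = 1.
  apply: le_anti; rewrite w1 /=; apply: lb_le_inf => // r [mu [h1 h2 <-]].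
  by rewrite Hi0.
exists w; split; last by exists i0; rewrite wi0 oner_neq0.
move=> j; split => //.
apply/ler_addgt0Pr => e e0.
have NN0 : 0 <= NN by apply: ler0n.
have kR : 0 <= (k%:R : R) by apply: ler0n.
have C0 : 0 < NN * k%:R + 1 by apply: ltr_wpDl => //; apply: mulr_ge0.
pose eps := e / (NN * k%:R + 1).
have eps0 : 0 < eps by apply: divr_gt0.
have eC : eps * (NN * k%:R + 1) = e by rewrite /eps divfK // lt0r_neq0.
have [d [d0 Hd]] : exists d, 0 < d /\ forall i,
    exists mu, [/\ c0 <= mu, mu + d <= ms & zz mu i < w i + eps].
  apply: fin_delta => i.
  have [r [mu [h1 h2 <-]] hr] := inf_adherent eps0 (conj (Wne i) (Whas i)).
  exists (ms - mu); split; first by rewrite subr_gt0.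
  by move=> e' e'0 ed; exists mu; split => //; lra.
pose del := Num.min d (Num.min eps (ms - c0)).
have del0 : 0 < del by rewrite /del !lt_min d0 eps0 subr_gt0 lt0.
have deld : del <= d by rewrite /del ge_min lexx.
have dele : del <= eps by rewrite /del !ge_min lexx orbT.
have delm : del <= ms - c0 by rewrite /del !ge_min lexx !orbT.
pose mu := ms - del.
have c0mu : c0 <= mu by rewrite /mu; lra.
have mums : mu < ms by rewrite /mu; lra.
have mu0 : 0 <= mu by lra.
pose z := zz mu.
have wz' : forall i, w i <= z i by move=> i; apply: wz.
have zw : forall i, z i - w i <= eps.
  move=> i; have [mu_i [h1 h2 h3]] := Hd i.
  have : z i <= zz mu_i i by apply: Z4; [lra|rewrite /mu; lra].
  lra.
have [sz z1] := Z3 mu0.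
have lip : Ar z j - Ar w j <= NN * (k%:R * eps).
  apply: Ar_lip; first lra.
  by move=> i; split; [exact: w0|split; [exact: wz'|split; [exact: z1|exact: zw]]].
have hz : mu * z j ^+ k <= Ar z j by case: (sz j).
have pw : w j ^+ k <= z j ^+ k by apply: pow_mono.
have pw1 : w j ^+ k <= 1 by apply: exprn_ile1.
have pw0 : 0 <= w j ^+ k by apply: exprn_ge0.
have h4 : ms * w j ^+ k <= mu * w j ^+ k + eps.
  have : del * w j ^+ k <= eps by nra.
  rewrite /mu; lra.
have h5 : mu * w j ^+ k <= mu * z j ^+ k by apply: ler_wpM2l.
nra.
Qed.


Lemma sum_inj_le (I J : finType) (g : I -> J) (P : pred J) (F : J -> R) :
  injective g -> (forall i, P (g i)) -> (forall j, 0 <= F j) ->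
  \sum_i F (g i) <= \sum_(j | P j) F j.
Proof.
move=> ginj Pg F0.
have -> : \sum_i F (g i) = \sum_(j in (g @: [set: I])%SET) F j.
  by rewrite big_imset //=; [apply: eq_bigl => i; rewrite finset.in_setT|move=> x y _ _; apply: ginj].
rewrite big_mkcond [X in _ <= X]big_mkcond /=; apply: ler_sum => j _.
case: ifP => jI; last by case: ifP.
by move/imsetP: jI => [i _ ->]; rewrite Pg.
Qed.

Lemma core_sub (S : {set V}) :
  (forall i, i \in S -> (k <= #|nbhd adj i :&: S|)%N) ->
  sub (k`!%:R) (fun i => if i \in S then 1 else 0).
Proof.
move=> HS; pose x := fun i => if i \in S then (1:R) else 0.
change (sub (k`!%:R) x); move=> i.
have x0 : forall m, 0 <= x m by move=> m; rewrite /x; case: ifP.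
split; first exact: x0.
case: (boolP (i \in S)) => iS; last first.
  have -> : x i = 0 by rewrite /x (negbTE iS).
  by rewrite zpow mulr0; apply: Ar_ge0.
have -> : x i = 1 by rewrite /x iS.
rewrite expr1n mulr1.
set W := nbhd adj i :&: S.
have hW : (k <= #|W|)%N := HS i iS.
pose f0 := fun m : 'I_k => enum_val (widen_ord hW m).
have f0inj : injective f0.
  by move=> m1 m2 /enum_val_inj /(congr1 val) /= e; apply: val_inj.
have f0W : forall m, f0 m \in W by move=> m; apply: enum_valP.
pose g := fun s : {perm 'I_k} => [ffun m => f0 (s m)].
have ginj : injective g.
  move=> s1 s2 e; apply/permP => m.
  by apply: f0inj; move/ffunP: e => /(_ m); rewrite !ffunE.
have gg : forall s, good i (g s).
  move=> s; apply/and3P; split.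
  - apply/injectiveP => m1 m2; rewrite !ffunE => /f0inj; exact: perm_inj.
  - apply/codomP => [[m]]; rewrite ffunE => e.
    have := f0W (s m); rewrite -e finset.in_setI finset.in_set.
    by rewrite adj_irr.
  - apply/forallP => m; rewrite ffunE.
    by have := f0W (s m); rewrite finset.in_setI finset.in_set => /andP [].
have F0 : forall f : {ffun 'I_k -> V}, 0 <= \prod_(j < k) x (f j).
  by move=> f; apply: prodr_ge0 => j _; exact: x0.
have := sum_inj_le (P := good i) (F := fun f => \prod_(j < k) x (f j)) ginj gg F0.
have -> : \sum_(s : {perm 'I_k}) \prod_(j < k) x (g s j) = \sum_(s : {perm 'I_k}) 1.
  apply: eq_bigr => s _; apply: big1 => j _.
  rewrite /x ffunE; have := f0W (s j); rewrite finset.in_setI => /andP [_ ->] //.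
by rewrite sumr_const card_Sn.
Qed.


Notation C := (real_complex R).

Lemma kadj_real (x : V -> R) i :
  kadj_apply adj k (fun j => C (x j)) i = C ((k`!%:R)^-1 * Ar x i).
Proof.
rewrite /kadj_apply rmorphM fmorphV rmorph_nat /Ar rmorph_sum mulr_sumr.
rewrite [RHS]big_mkcond /=; apply: eq_bigr => f _.
rewrite /kadj_entry -/(good i f) rmorph_prod.
by case: (good i f); rewrite ?mul0r.
Qed.

Lemma normx_real (z : R[i]) : `|z| = C (Num.sqrt (complex.Re z ^+ 2 + complex.Im z ^+ 2)).
Proof. exact: normc_def. Qed.

Lemma eig_bound (l : R[i]) : kadj_eigenvalue adj k l ->
  Num.sqrt (complex.Re l ^+ 2 + complex.Im l ^+ 2) <= NN.
Proof.
move=> [x [[i1 nz] Hx]].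
pose nu := fun i => Num.sqrt (complex.Re (x i) ^+ 2 + complex.Im (x i) ^+ 2).
case: (@arg_maxP _ R V i1 xpredT nu isT) => j _ Hj.
have nj : forall i, `|x i| <= `|x j|.
  by move=> i; rewrite !normx_real lecR; apply: Hj.
have xj0 : 0 < `|x j|.
  apply: lt_le_trans (nj i1); by rewrite normr_gt0.
have xjk : 0 < `|x j| ^+ k by apply: exprn_gt0.
suff : `|l| <= C NN by rewrite normx_real lecR.
rewrite -(ler_pM2r xjk) -normrX -normrM -Hx.
rewrite /kadj_apply normrX; apply: le_trans (ler_norm_sum _ _ _) _.
have -> : C NN * `|x j| ^+ k = \sum_(f : {ffun 'I_k -> V}) `|x j| ^+ k.
  by rewrite sumr_const /NN rmorph_nat mulr_natl.
apply: ler_sum => f _; rewrite normrM normr_prod.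
rewrite -[`|x j| ^+ k]mul1r; apply: ler_pM => //.
- by apply: prodr_ge0 => m _.
- rewrite /kadj_entry; case: ifP => _; last by rewrite normr0 ler01.
  rewrite normfV ger0_norm ?ler0n // invr_le1 ?ler1n ?ltr0n ?fact_gt0 //.
  by rewrite unitfE pnatr_eq0 -lt0n fact_gt0.
- have -> : `|x j| ^+ k = \prod_(m < k) `|x j| by rewrite prodr_const card_ord.
  apply: ler_prod => m _.
  by rewrite normr_ge0 nj.
Qed.

Lemma eig_kcore (l : R[i]) : kadj_eigenvalue adj k l -> l != 0 -> has_kcore adj k.
Proof.
move=> [x [[i1 nz] Hx]] l0.
exists (finset (fun i => x i != 0)); split.
  by apply/set0Pn; exists i1; rewrite finset.in_set.
move=> i; rewrite finset.in_set => xi.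
have ne : kadj_apply adj k x i != 0 by rewrite Hx mulf_neq0 // expf_neq0.
have [f [gf pf]] : exists f, good i f /\ \prod_(j < k) x (f j) != 0.
  apply: NNPP => Hn; move/eqP: ne; apply; apply: big1 => f _.
  rewrite /kadj_entry -/(good i f); case: (boolP (good i f)) => gf; last by rewrite mul0r.
  case: (\prod_(j < k) x (f j) =P 0) => [->|pn]; first by rewrite mulr0.
  by exfalso; apply: Hn; exists f; split => //; apply/eqP.
have finj : injective f by case/and3P: gf => /injectiveP.
rewrite -(card_ord k) -(card_imset (mem 'I_k) finj).
apply: subset_leq_card; apply/fintype.subsetP => v /imsetP [m _ ->].
rewrite finset.in_setI !finset.in_set good_adj //=.
by move/prodf_neq0: pf => /(_ m isT).
Qed.


Lemma forward : has_kcore adj k -> 1 <= rho_k R adj k.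
Proof.
move=> [S [Sne HS]].
have s0 := core_sub HS.
have [i0 i0S] : exists i, i \in S by move/set0Pn: Sne.
have c00 : 0 < (k`!%:R : R) by rewrite ltr0n fact_gt0.
have H0 : exists x, sub (k`!%:R) x /\ exists i, x i != 0.
  by exists (fun i => if i \in S then 1 else 0); split => //; exists i0; rewrite i0S oner_neq0.
have [mu [c0mu [H1 H2]]] := attain c00 H0.
have mu0 : 0 < mu by apply: lt_le_trans c0mu.
have [x [x0 [[i nz] Hx]]] := eigen_exists mu0 H1 H2.
pose a := (k`!%:R)^-1 * mu.
have a1 : 1 <= a by rewrite /a mulrC ler_pdivlMr // mul1r.
have a0 : 0 <= a by apply: le_trans ler01 a1.
have eig : kadj_eigenvalue adj k (C a).
  exists (fun j => C (x j)); split.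
    by exists i; rewrite fmorph_eq0.
  move=> j; rewrite kadj_real Hx /a -rmorphXn -rmorphM mulrA //.
have Eub : has_ubound [set Num.sqrt (complex.Re l ^+ 2 + complex.Im l ^+ 2)
     | l in @kadj_eigenvalue R V adj k]%classic.
  by exists NN => r [l hl <-]; apply: eig_bound.
apply: le_trans a1 _; apply: ub_le_sup => //; exists (C a) => //=.
by rewrite expr0n /= addr0 sqrtr_sqr ger0_norm //; exact: a0.
Qed.

Lemma backward : 1 <= rho_k R adj k -> has_kcore adj k.
Proof.
move=> h; apply: NNPP => nk.
have E0 : forall r, [set Num.sqrt (complex.Re l ^+ 2 + complex.Im l ^+ 2)
     | l in @kadj_eigenvalue R V adj k]%classic r -> r = 0.
  move=> r [l hl <-].
  have -> : l = 0 by apply: NNPP => ln; apply: nk; apply: (eig_kcore hl); apply/eqP.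
  by rewrite /= expr0n /= addr0 sqrtr0.
have : rho_k R adj k <= 0.
  rewrite /rho_k; case: (classic (exists r, [set Num.sqrt (complex.Re l ^+ 2 + complex.Im l ^+ 2)
     | l in @kadj_eigenvalue R V adj k]%classic r)) => [[r hr]|ne].
    by apply: ge_sup; [exists r|move=> s hs; rewrite (E0 s hs)].
  by rewrite sup_out // => [[[r hr] _]]; apply: ne; exists r.
lra.
Qed.

End Main.

Unset Implicit Arguments.

Theorem theorem3p1 (R : realType) (V : finType) (adj : rel V) (k : nat) :
  simple_graph adj -> (1 <= k)%N ->
  (has_kcore adj k <-> 1 <= @rho_k R V adj k).
Proof.
move=> [sym irr] k1; split.
- exact: forward.
- exact: backward.
Qed.
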